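(* For each integer $n\ge 1$, the function $x\mapsto k_n(x)$ is strictly increasing on each of the intervals $[0,1)$ and $(1,+\infty)$: on $[0,1)$ it increases from $k_n(0)=0$ to $+\infty$ (as $x\to 1^-$), and on $(1,+\infty)$ it increases from $-\infty$ (as $x\to1^+$) to $-1$ (as $x\to+\infty$).
   Context: For an integer $n\ge1$, $x\ge 0$, $x\neq 1$, define $H_n(x,0)=\sum_{l=1}^{n}\frac{1-x\cos(2\pi l/n)}{\left(1+x^2-2x\cos(2\pi l/n)\right)^{3/2}}$, and $k_n(x)=\frac1n H_n(x,0)-1$. *)

(* Defs.v *)
From Stdlib Require Import Reals.
From Coquelicot Require Import Coquelicot.
Open Scope R_scope.

Definition H (n : nat) (x : R) : R :=
  sum_f 1 n (fun l =>
    let c := cos (2 * PI * INR l / INR n) in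
    (1 - x * c) / Rpower (1 + x ^ 2 - 2 * x * c) (3 / 2)).

Definition k (n : nat) (x : R) : R := H n x / INR n - 1.

(* Main.v *)
Require Import Defs.
From Stdlib Require Import Reals Lra Lia Psatz.
From Coquelicot Require Import Coquelicot.
Open Scope R_scope.

Ltac rr := match goal with |- ?a = ?b => change (@eq R a b) end; ring.

Fixpoint al (j : nat) : R :=
  match j with O => 1 | S j => al j * (2 * INR j + 1) / (2 * INR j + 2) end.

Lemma al_pos j : 0 < al j /\ al j <= 1.
Proof.
  induction j as [|j [IH1 IH2]]; simpl; [lra|].
  assert (0 <= INR j) by apply pos_INR.
  split.
  - apply Rdiv_lt_0_compat; nra.
  - apply Rmult_le_reg_r with (2 * INR j + 2); [lra|].
    unfold Rdiv; rewrite Rmult_assoc, Rinv_l; nra.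
Qed.

Lemma al_rec j : INR (S j) * al (S j) = (INR j + /2) * al j.
Proof.
  simpl al. rewrite S_INR. assert (0 <= INR j) by apply pos_INR. field. lra.
Qed.

Lemma pow_le1 r j : 0 <= r <= 1 -> 0 <= r ^ j <= 1.
Proof. intros H. induction j; simpl; nra. Qed.

Lemma cv_bound (a : nat -> R) x :
  (forall j, Rabs (a j) <= 1) -> Rabs x < 1 -> Rbar_lt (Rabs x) (CV_radius a).
Proof.
  intros Ha Hx.
  destruct (CV_radius_bounded a) as [Hub _].
  assert (0 <= Rabs x) by apply Rabs_pos.
  set (r := (Rabs x + 1) / 2).
  assert (Hr : Rbar_le r (CV_radius a)).
  { apply Hub. exists 1. intros j. rewrite Rabs_mult.
    assert (Rabs (r ^ j) <= 1).
    { rewrite <- RPow_abs. apply pow_le1. split; [apply Rabs_pos|].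
      unfold r; rewrite Rabs_pos_eq; lra. }
    specialize (Ha j). assert (0 <= Rabs (a j)) by apply Rabs_pos.
    assert (0 <= Rabs (r ^ j)) by apply Rabs_pos. nra. }
  eapply Rbar_lt_le_trans; [|exact Hr]. simpl. unfold r; lra.
Qed.
Definition RL (a : nat -> R) x := Rbar_lt (Rabs x) (CV_radius a).

Lemma is_ps (a : nat -> R) x : RL a x -> is_series (fun k => a k * x ^ k) (PSeries a x).
Proof.
  intros H. unfold PSeries. apply Series_correct. apply ex_series_Rabs.
  apply (CV_disk_inside a x H).
Qed.

Lemma is_lin (u v : nat -> R) lu lv p q :
  is_series u lu -> is_series v lv ->
  is_series (fun k => p * u k + q * v k) (p * lu + q * lv).
Proof.
  intros Hu Hv.
  apply (is_series_plus _ _ _ _ (is_series_scal p _ _ Hu) (is_series_scal q _ _ Hv)).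
Qed.

Lemma is_ps_j (a : nat -> R) x : RL a x ->
  is_series (fun k => INR k * a k * x ^ k) (x * PSeries (PS_derive a) x).
Proof.
  intros H.
  assert (H' : RL (PS_derive a) x) by (unfold RL; rewrite CV_radius_derive; exact H).
  rewrite <- PSeries_incr_1.
  apply is_series_ext with (fun k => PS_incr_1 (PS_derive a) k * x ^ k).
  { intros [|k]; unfold PS_incr_1, PS_derive; simpl; [unfold zero; simpl; ring|]. ring. }
  apply is_ps. unfold RL. rewrite CV_radius_incr_1. exact H'.
Qed.

Definition ac t j := al j * cos (INR j * t).
Definition as_ t j := al j * sin (INR j * t).
Definition A t x := PSeries (ac t) x.
Definition B t x := PSeries (as_ t) x.
Definition A' t x := PSeries (PS_derive (ac t)) x.
Definition B' t x := PSeries (PS_derive (as_ t)) x.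

Lemma RL_ac t x : Rabs x < 1 -> RL (ac t) x.
Proof.
  intros H; apply cv_bound; auto. intros j; unfold ac.
  rewrite Rabs_mult. destruct (al_pos j). rewrite Rabs_pos_eq by lra.
  assert (Rabs (cos (INR j * t)) <= 1) by apply Rabs_le, COS_bound. 
  assert (0 <= Rabs (cos (INR j * t))) by apply Rabs_pos. nra.
Qed.

Lemma RL_as t x : Rabs x < 1 -> RL (as_ t) x.
Proof.
  intros H; apply cv_bound; auto. intros j; unfold as_.
  rewrite Rabs_mult. destruct (al_pos j). rewrite Rabs_pos_eq by lra.
  assert (Rabs (sin (INR j * t)) <= 1) by apply Rabs_le, SIN_bound. 
  assert (0 <= Rabs (sin (INR j * t))) by apply Rabs_pos. nra.
Qed.

Lemma RL_der a x : RL a x -> RL (PS_derive a) x.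
Proof. unfold RL; rewrite CV_radius_derive; auto. Qed.

Lemma ode_A t x : Rabs x < 1 ->
  A' t x = cos t * (x * A' t x + A t x / 2) - sin t * (x * B' t x + B t x / 2).
Proof.
  intros Hx.
  assert (H1 := is_lin _ _ _ _ (cos t) (/2 * cos t) (is_ps_j _ _ (RL_ac t x Hx)) (is_ps _ _ (RL_ac t x Hx))).
  assert (H2 := is_lin _ _ _ _ (- sin t) (- (/2 * sin t)) (is_ps_j _ _ (RL_as t x Hx)) (is_ps _ _ (RL_as t x Hx))).
  assert (H3 := is_lin _ _ _ _ 1 1 H1 H2).
  unfold A', A, B', B.
  replace (cos t * (x * PSeries (PS_derive (ac t)) x + PSeries (ac t) x / 2) -
   sin t * (x * PSeries (PS_derive (as_ t)) x + PSeries (as_ t) x / 2)) with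
   (1 * (cos t * (x * PSeries (PS_derive (ac t)) x) + / 2 * cos t * PSeries (ac t) x) +
   1 * (- sin t * (x * PSeries (PS_derive (as_ t)) x) + - (/ 2 * sin t) * PSeries (as_ t) x)) by (unfold Rdiv; ring).
  apply is_series_unique.
  apply is_series_ext with (2 := H3).
  intros k; cbv beta. unfold PS_derive, ac, as_.
  rewrite <- (Rmult_assoc (INR (S k))), al_rec.
  replace (INR (S k) * t) with (INR k * t + t) by (rewrite S_INR; ring).
  rewrite cos_plus. match goal with |- ?a = ?b => change (@eq R a b) end; ring.
Qed.

Lemma ode_B t x : Rabs x < 1 ->
  B' t x = sin t * (x * A' t x + A t x / 2) + cos t * (x * B' t x + B t x / 2).
Proof.
  intros Hx.
  assert (H1 := is_lin _ _ _ _ (sin t) (/2 * sin t) (is_ps_j _ _ (RL_ac t x Hx)) (is_ps _ _ (RL_ac t x Hx))).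
  assert (H2 := is_lin _ _ _ _ (cos t) (/2 * cos t) (is_ps_j _ _ (RL_as t x Hx)) (is_ps _ _ (RL_as t x Hx))).
  assert (H3 := is_lin _ _ _ _ 1 1 H1 H2).
  unfold A', A, B', B.
  replace (sin t * (x * PSeries (PS_derive (ac t)) x + PSeries (ac t) x / 2) +
   cos t * (x * PSeries (PS_derive (as_ t)) x + PSeries (as_ t) x / 2)) with
   (1 * (sin t * (x * PSeries (PS_derive (ac t)) x) + / 2 * sin t * PSeries (ac t) x) +
   1 * (cos t * (x * PSeries (PS_derive (as_ t)) x) + (/ 2 * cos t) * PSeries (as_ t) x)) by (unfold Rdiv; ring).
  apply is_series_unique.
  apply is_series_ext with (2 := H3).
  intros k; cbv beta. unfold PS_derive, ac, as_.
  rewrite <- (Rmult_assoc (INR (S k))), al_rec.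
  replace (INR (S k) * t) with (INR k * t + t) by (rewrite S_INR; ring).
  rewrite sin_plus. match goal with |- ?a = ?b => change (@eq R a b) end; ring.
Qed.

Lemma key t x : Rabs x < 1 ->
  (1 + x^2 - 2*x*cos t) * (A t x * A' t x + B t x * B' t x)
  = (A t x ^ 2 + B t x ^ 2) * (cos t - x) / 2.
Proof.
  intros Hx. pose proof (ode_A t x Hx) as E1. pose proof (ode_B t x Hx) as E2.
  pose proof (sin2_cos2 t) as W. unfold Rsqr in W.
  set (a := A t x) in *. set (b := B t x) in *. set (a' := A' t x) in *. set (b' := B' t x) in *.
  set (c := cos t) in *. set (s := sin t) in *.
  set (L1 := a' - (c * (x * a' + a / 2) - s * (x * b' + b / 2))).
  set (L2 := b' - (s * (x * a' + a / 2) + c * (x * b' + b / 2))).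
  assert (HL1 : L1 = 0) by (unfold L1; lra).
  assert (HL2 : L2 = 0) by (unfold L2; lra).
  assert (HW : s * s + c * c - 1 = 0) by lra.
  transitivity ((1 + x^2 - 2*x*c) * (a * a' + b * b') - (a ^ 2 + b ^ 2) * (c - x) / 2
     + (a ^ 2 + b ^ 2) * (c - x) / 2); [ring|].
  replace ((1 + x^2 - 2*x*c) * (a * a' + b * b') - (a ^ 2 + b ^ 2) * (c - x) / 2) with
    (a * ((1 - x*c) * L1 - x*s*L2) + b * (x*s*L1 + (1-x*c)*L2)
      - (s * s + c * c - 1) * (x^2 * (a*a' + b*b') + x * (a^2+b^2)/2)) by (unfold L1, L2; field).
  rewrite HL1, HL2, HW. ring.
Qed.

Lemma ex_der_A t x : Rabs x < 1 -> is_derive (A t) x (A' t x).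
Proof. intros H. apply is_derive_PSeries. apply RL_ac; auto. Qed.
Lemma ex_der_B t x : Rabs x < 1 -> is_derive (B t) x (B' t x).
Proof. intros H. apply is_derive_PSeries. apply RL_as; auto. Qed.

Definition phi t y := (A t y ^ 2 + B t y ^ 2) ^ 2 * (1 + y ^ 2 - 2 * y * cos t).

Lemma phi_der t y : Rabs y < 1 -> is_derive (phi t) y 0.
Proof.
  intros Hy. unfold phi.
  pose proof (ex_der_A t y Hy). pose proof (ex_der_B t y Hy).
  auto_derive.
  - repeat split; eexists; eauto.
    change (fun x : R => A t x) with (A t). change (fun x : R => B t x) with (B t). rewrite (is_derive_unique _ _ _ H), (is_derive_unique _ _ _ H0).
    pose proof (key t y Hy). nra.
Qed.

Lemma A0 t : A t 0 = 1.
Proof. unfold A. rewrite PSeries_0. unfold ac. simpl. rewrite Rmult_0_l, cos_0. ring. Qed.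
Lemma B0 t : B t 0 = 0.
Proof. unfold B. rewrite PSeries_0. unfold as_. simpl. rewrite Rmult_0_l, sin_0. ring. Qed.

Lemma phi_1 t x : Rabs x < 1 -> phi t x = 1.
Proof.
  intros Hx.
  assert (Hin : forall z, Rmin 0 x <= z <= Rmax 0 x -> Rabs z < 1).
  { intros z [Hz1 Hz2]. apply Rabs_def1.
    - apply Rle_lt_trans with (Rmax 0 x); auto. apply Rmax_lub_lt; [lra|]. apply Rabs_def2 in Hx; lra.
    - apply Rlt_le_trans with (Rmin 0 x); auto. apply Rmin_glb_lt; [lra|]. apply Rabs_def2 in Hx; lra. }
  destruct (MVT_gen (phi t) 0 x (fun _ => 0)) as [z [_ Hz]].
  - intros z Hz. apply phi_der. apply Hin. lra.
  - intros z Hz. apply (proj2 (continuity_pt_filterlim _ _)). apply (ex_derive_continuous (phi t) z).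
    eexists. apply phi_der. apply Hin. lra.
  - assert (phi t 0 = 1) by (unfold phi; rewrite A0, B0; ring). lra.
Qed.

Lemma rp32 a : 0 < a -> Rpower a (3/2) = a * sqrt a.
Proof.
  intros Ha. replace (3/2) with (1 + /2) by field.
  rewrite Rpower_plus, Rpower_1, Rpower_sqrt; auto.
Qed.

Lemma q_pos t x : Rabs x < 1 -> 0 < 1 + x^2 - 2*x*cos t.
Proof.
  intros Hx. pose proof (COS_bound t).
  destruct (Rle_dec 0 x).
  - rewrite Rabs_pos_eq in Hx by lra. nra.
  - rewrite Rabs_left in Hx by lra. nra.
Qed.

Lemma u_sqrt t x : Rabs x < 1 ->
  sqrt (1 + x^2 - 2*x*cos t) * (A t x ^ 2 + B t x ^ 2) = 1.
Proof.
  intros Hx. pose proof (q_pos t x Hx) as Hq. pose proof (phi_1 t x Hx) as Hp. unfold phi in Hp.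
  set (q := 1 + x^2 - 2*x*cos t) in *. set (u := A t x ^ 2 + B t x ^ 2) in *.
  assert (Hu : 0 <= u) by (unfold u; nra).
  pose proof (sqrt_lt_R0 q Hq). pose proof (sqrt_sqrt q (Rlt_le _ _ Hq)).
  assert (0 <= sqrt q * u) by nra.
  assert ((sqrt q * u) ^ 2 = 1) by (replace ((sqrt q * u) ^ 2) with ((sqrt q * sqrt q) * u ^ 2) by ring; rewrite H0; lra).
  nra.
Qed.

Definition fterm (c x : R) := (1 - x * c) / Rpower (1 + x ^ 2 - 2 * x * c) (3 / 2).

Lemma term_lt1 t x : Rabs x < 1 ->
  fterm (cos t) x = (A t x ^ 2 + B t x ^ 2) + 2 * x * (A t x * A' t x + B t x * B' t x).
Proof.
  intros Hx. unfold fterm.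
  pose proof (q_pos t x Hx) as Hq. pose proof (u_sqrt t x Hx) as Hs. pose proof (key t x Hx) as Hk.
  rewrite rp32 by auto.
  remember (1 + x^2 - 2*x*cos t) as q eqn:Eq.
  set (u := A t x ^ 2 + B t x ^ 2) in *.
  set (K := A t x * A' t x + B t x * B' t x) in *.
  pose proof (sqrt_lt_R0 q Hq).
  assert (HK : K = u * (cos t - x) / (2 * q)) by (apply (Rmult_eq_reg_l q); [rewrite Hk; field|]; lra).
  assert (Hu : u = / sqrt q) by (apply (Rmult_eq_reg_l (sqrt q)); [rewrite Hs; field|]; lra).
  rewrite HK, Hu. clearbody u K.
  replace (1 - x * cos t) with (q - x^2 + x * cos t) by (rewrite Eq; ring).
  field. split; lra.
Qed.

Lemma term_gt1 t x : 1 < x ->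
  fterm (cos t) x = - 2 * (/x) ^ 2 * (A t (/x) * A' t (/x) + B t (/x) * B' t (/x)).
Proof.
  intros Hx. set (y := / x).
  assert (Hy : 0 < y < 1). { unfold y. split. apply Rinv_0_lt_compat; lra.
    rewrite <- Rinv_1. apply Rinv_lt_contravar; lra. }
  assert (Hxy : x = / y) by (unfold y; rewrite Rinv_inv; auto).
  assert (Hay : Rabs y < 1) by (rewrite Rabs_pos_eq; lra).
  unfold fterm.
  pose proof (q_pos t y Hay) as Hq. pose proof (u_sqrt t y Hay) as Hs. pose proof (key t y Hay) as Hk.
  assert (Hqx : 1 + x ^ 2 - 2 * x * cos t = (1 + y^2 - 2*y*cos t) / y ^ 2) by (rewrite Hxy; field; lra).
  rewrite Hqx.
  clearbody y. subst x.
  remember (1 + y^2 - 2*y*cos t) as q eqn:Eq.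
  set (u := A t y ^ 2 + B t y ^ 2) in *.
  set (K := A t y * A' t y + B t y * B' t y) in *.
  pose proof (sqrt_lt_R0 q Hq).
  assert (HK : K = u * (cos t - y) / (2 * q)) by (apply (Rmult_eq_reg_l q); [rewrite Hk; field|]; lra).
  assert (Hu : u = / sqrt q) by (apply (Rmult_eq_reg_l (sqrt q)); [rewrite Hs; field|]; lra).
  rewrite rp32 by (apply Rdiv_lt_0_compat; [lra| apply pow_lt; lra]).
  rewrite sqrt_div_alt by (apply pow_lt; lra).
  replace (y ^ 2) with (Rsqr y) by (unfold Rsqr; ring). rewrite sqrt_Rsqr by lra.
  rewrite HK, Hu. clearbody u K. unfold Rsqr. field. repeat split; lra.
Qed.
Definition ssum (a : nat -> R) (m : nat) : R := sum_n a m.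

Lemma sn_ext (a b : nat -> R) m : (forall k, (k <= m)%nat -> a k = b k) -> ssum a m = ssum b m.
Proof. apply sum_n_ext_loc. Qed.
Lemma sn_mult_l (c : R) (a : nat -> R) m : ssum (fun k => c * a k) m = c * ssum a m.
Proof. apply (sum_n_mult_l (K := R_Ring) c a m). Qed.
Lemma sn_plus (a b : nat -> R) m : ssum (fun k => a k + b k) m = ssum a m + ssum b m.
Proof. apply (sum_n_plus (G := R_AbelianMonoid) a b m). Qed.
Lemma sn_S (a : nat -> R) m : ssum a (S m) = ssum a m + a (S m).
Proof. apply (sum_Sn (G := R_AbelianMonoid)). Qed.
Lemma sn_0 (a : nat -> R) : ssum a 0 = a 0%nat.
Proof. apply (sum_O (G := R_AbelianMonoid)). Qed.
Lemma sn_switch (u : nat -> nat -> R) m n :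
  ssum (fun i => ssum (u i) n) m = ssum (fun j => ssum (fun i => u i j) m) n.
Proof. apply (sum_n_switch (G := R_AbelianMonoid)). Qed.

Lemma sn_single (w : nat -> R) (k : nat) (v : R) m :
  ssum (fun r => w r * (if Nat.eqb k r then v else 0)) m = if Nat.leb k m then w k * v else 0.
Proof.
  induction m.
  - rewrite sn_0. destruct k; simpl; ring.
  - rewrite sn_S, IHm.
    destruct (Nat.eqb k (S m)) eqn:E.
    + apply Nat.eqb_eq in E; subst. rewrite (proj2 (Nat.leb_gt _ _)) by lia.
      rewrite (proj2 (Nat.leb_le _ _)) by lia. ring.
    + destruct (Nat.leb k m) eqn:E2.
      * apply Nat.leb_le in E2. rewrite (proj2 (Nat.leb_le _ _)) by lia. ring.
      * apply Nat.leb_gt in E2. apply Nat.eqb_neq in E.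
        rewrite (proj2 (Nat.leb_gt _ _)) by lia. ring.
Qed.

Lemma sn_tele (F : nat -> R) m : ssum (fun k => F (S k) - F k) m = F (S m) - F 0%nat.
Proof. induction m. rewrite sn_0; ring. rewrite sn_S, IHm; ring. Qed.

Lemma sn_const (c : R) m : ssum (fun _ => c) m = INR (S m) * c.
Proof. apply sum_n_const. Qed.

Definition th (n l : nat) := 2 * PI * INR l / INR n.

Lemma orth_pos n d : (0 < d < n)%nat ->
  ssum (fun l => cos (INR d * th n (S l))) (n - 1) = 0.
Proof.
  intros Hd.
  assert (Hn : 0 < INR n) by (apply lt_0_INR; lia).
  set (a := 2 * PI * INR d / INR n).
  assert (Ha : 0 < a / 2 < PI).
  { unfold a. pose proof PI_RGT_0. assert (INR d < INR n) by (apply lt_INR; lia).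
    assert (0 < INR d) by (apply lt_0_INR; lia).
    split. apply Rmult_lt_0_compat; [|lra]. apply Rdiv_lt_0_compat; [|lra]. nra.
    apply Rmult_lt_reg_r with (INR n); auto. unfold Rdiv. field_simplify; [|lra]. nra. }
  pose proof (sin_gt_0 _ (proj1 Ha) (proj2 Ha)) as Hs.
  set (F := fun m : nat => sin (INR m * a + a / 2)).
  assert (E : forall l, 2 * sin (a/2) * cos (INR d * th n (S l)) = F (S l) - F l).
  { intros l. unfold F. replace (INR d * th n (S l)) with (INR (S l) * a) by (unfold th, a; field; lra).
    replace (INR l * a + a/2) with (INR (S l) * a - a/2) by (rewrite S_INR; lra).
    rewrite sin_plus, sin_minus. ring. }
  assert (T : 2 * sin (a/2) * ssum (fun l => cos (INR d * th n (S l))) (n - 1) = 0).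
  { rewrite <- sn_mult_l. rewrite (sn_ext _ (fun l => F (S l) - F l)) by (intros; apply E).
    rewrite sn_tele. unfold F. replace (S (n - 1)) with n by lia. simpl INR at 2.
    replace (INR n * a + a / 2) with (a / 2 + 2 * INR d * PI) by (unfold a; field; lra).
    rewrite sin_period, Rmult_0_l, Rplus_0_l. ring. }
  apply Rmult_integral in T. destruct T as [T|T]; [lra|exact T].
Qed.

Lemma orth n r s : (1 <= n)%nat -> (r <= n - 1)%nat -> (s <= n - 1)%nat ->
  ssum (fun l => cos (INR r * th n (S l) - INR s * th n (S l))) (n - 1) =
  if Nat.eqb r s then INR n else 0.
Proof.
  intros Hn Hr Hs.
  destruct (Nat.eqb r s) eqn:E.
  - apply Nat.eqb_eq in E; subst.
    rewrite (sn_ext _ (fun _ => 1)) by (intros; rewrite Rminus_diag, cos_0; auto).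
    rewrite sn_const. replace (S (n - 1)) with n by lia. ring.
  - apply Nat.eqb_neq in E.
    destruct (Nat.lt_ge_cases s r).
    + rewrite <- (orth_pos n (r - s)) by lia. apply sn_ext. intros k _.
      rewrite minus_INR by lia. f_equal. ring.
    + rewrite <- (orth_pos n (s - r)) by lia. apply sn_ext. intros k _.
      rewrite minus_INR by lia. rewrite <- cos_neg. f_equal. ring.
Qed.

Lemma sn_mult_r (c : R) (a : nat -> R) m : ssum (fun k => a k * c) m = ssum a m * c.
Proof. rewrite (sn_ext _ (fun k => c * a k)) by (intros; ring). rewrite sn_mult_l; ring. Qed.

Lemma prod_sum (X Y : nat -> R) m :
  ssum X m * ssum Y m = ssum (fun r => ssum (fun s => X r * Y s) m) m.
Proof.
  rewrite <- sn_mult_r. apply sn_ext. intros r _. rewrite sn_mult_l. reflexivity.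
Qed.

Lemma parseval n (g d : nat -> R) : (1 <= n)%nat ->
  ssum (fun l =>
    ssum (fun r => cos (INR r * th n (S l)) * g r) (n-1) * ssum (fun s => cos (INR s * th n (S l)) * d s) (n-1)
  + ssum (fun r => sin (INR r * th n (S l)) * g r) (n-1) * ssum (fun s => sin (INR s * th n (S l)) * d s) (n-1)) (n-1)
  = INR n * ssum (fun r => g r * d r) (n-1).
Proof.
  intros Hn.
  rewrite (sn_ext _ (fun l => ssum (fun r => ssum (fun s =>
      cos (INR r * th n (S l) - INR s * th n (S l)) * (g r * d s)) (n-1)) (n-1))).
  2:{ intros l _. rewrite !prod_sum, <- sn_plus. apply sn_ext. intros r _.
      rewrite <- sn_plus. apply sn_ext. intros s _. rewrite cos_minus. ring. }
  rewrite sn_switch.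
  rewrite (sn_ext _ (fun r => ssum (fun s => (g r * d s) * (if Nat.eqb r s then INR n else 0)) (n-1))).
  2:{ intros r Hr. rewrite sn_switch. apply sn_ext. intros s Hs.
      rewrite <- (orth n r s) by lia. rewrite <- sn_mult_l. apply sn_ext. intros; ring. }
  rewrite <- sn_mult_l. apply sn_ext. intros r Hr.
  rewrite (sn_single (fun s => g r * d s) r (INR n)). rewrite (proj2 (Nat.leb_le _ _)) by lia. ring.
Qed.

Definition ar (n r j : nat) : R := if Nat.eqb (j mod n) r then al j else 0.
Definition G n r x := PSeries (ar n r) x.
Definition D n r x := PSeries (PS_derive (ar n r)) x.

Lemma trig_mod (tr : R -> R) (Htr : forall z k, tr (z + 2 * INR k * PI) = tr z) n l j :
  (1 <= n)%nat -> tr (INR j * th n l) = tr (INR (j mod n) * th n l).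
Proof.
  intros Hn. assert (0 < INR n) by (apply lt_0_INR; lia).
  rewrite <- (Htr (INR (j mod n) * th n l) (l * (j / n))%nat).
  f_equal. rewrite (Nat.div_mod_eq j n) at 1. rewrite plus_INR, !mult_INR. unfold th. field. lra.
Qed.

Lemma is_ps_sum (a : nat -> nat -> R) m x : (forall r, RL (a r) x) ->
  is_series (fun k => ssum (fun r => a r k) m * x ^ k) (ssum (fun r => PSeries (a r) x) m).
Proof.
  intros Ha. induction m.
  - rewrite sn_0. apply is_series_ext with (fun k => a 0%nat k * x ^ k).
    { intros k. rewrite sn_0. reflexivity. }
    apply is_ps; auto.
  - rewrite sn_S. pose proof (is_lin _ _ _ _ 1 1 IHm (is_ps _ _ (Ha (S m)))) as H.
    rewrite !Rmult_1_l in H. apply is_series_ext with (2 := H).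
    intros k. cbv beta. rewrite sn_S. rr.
Qed.

Lemma ar_bound n r j : Rabs (ar n r j) <= 1.
Proof. unfold ar. destruct (Nat.eqb _ _); [destruct (al_pos j); rewrite Rabs_pos_eq; lra| rewrite Rabs_R0; lra]. Qed.

Lemma ar_nonneg n r j : 0 <= ar n r j.
Proof. unfold ar. destruct (Nat.eqb _ _); [destruct (al_pos j)|]; lra. Qed.

Lemma coef_split (tr : R -> R) (Htr : forall z k, tr (z + 2 * INR k * PI) = tr z) n l j :
  (1 <= n)%nat ->
  al j * tr (INR j * th n l) = ssum (fun r => tr (INR r * th n l) * ar n r j) (n - 1).
Proof.
  intros Hn. unfold ar.
  rewrite (sn_single (fun r => tr (INR r * th n l)) (j mod n) (al j)).
  rewrite (proj2 (Nat.leb_le _ _)).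
  - rewrite (trig_mod tr Htr n l j Hn). ring.
  - pose proof (Nat.mod_upper_bound j n). lia.
Qed.

Lemma RL_scal_ar (c : R) n r x : Rabs c <= 1 -> Rabs x < 1 -> RL (fun k => c * ar n r k) x.
Proof.
  intros Hc Hx. apply cv_bound; auto. intros j. rewrite Rabs_mult.
  pose proof (ar_bound n r j). pose proof (Rabs_pos c). pose proof (Rabs_pos (ar n r j)). nra.
Qed.

Lemma split_gen (tr : R -> R) (Htr : forall z k, tr (z + 2 * INR k * PI) = tr z)
  (Hb : forall z, Rabs (tr z) <= 1) n l x :
  (1 <= n)%nat -> Rabs x < 1 ->
  PSeries (fun j => al j * tr (INR j * th n l)) x = ssum (fun r => tr (INR r * th n l) * G n r x) (n-1) /\
  PSeries (PS_derive (fun j => al j * tr (INR j * th n l))) x = ssum (fun r => tr (INR r * th n l) * D n r x) (n-1).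
Proof.
  intros Hn Hx. split.
  - rewrite (PSeries_ext _ (fun j => ssum (fun r => tr (INR r * th n l) * ar n r j) (n - 1)))
      by (intros; apply coef_split; auto).
    replace (ssum (fun r => tr (INR r * th n l) * G n r x) (n-1)) with
      (ssum (fun r => PSeries (fun k => tr (INR r * th n l) * ar n r k) x) (n-1)).
    2:{ apply sn_ext. intros r _. unfold G. rewrite <- PSeries_scal. apply PSeries_ext. intros; reflexivity. }
    unfold PSeries at 1. apply is_series_unique.
    apply is_series_ext with (2 := is_ps_sum (fun r k => tr (INR r * th n l) * ar n r k) (n-1) x
      (fun r => RL_scal_ar _ n r x (Hb _) Hx)).
    intros; reflexivity.
  - rewrite (PSeries_ext _ (fun j => ssum (fun r => tr (INR r * th n l) * PS_derive (ar n r) j) (n - 1))).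
    2:{ intros j. unfold PS_derive.
        replace (INR (S j) * (al (S j) * tr (INR (S j) * th n l))) with (INR (S j) * (al (S j) * tr (INR (S j) * th n l))) by ring.
        rewrite (coef_split tr Htr n l (S j) Hn). rewrite <- sn_mult_l. apply sn_ext. intros; ring. }
    replace (ssum (fun r => tr (INR r * th n l) * D n r x) (n-1)) with
      (ssum (fun r => PSeries (fun k => tr (INR r * th n l) * PS_derive (ar n r) k) x) (n-1)).
    2:{ apply sn_ext. intros r _. unfold D. rewrite <- PSeries_scal. apply PSeries_ext. intros; reflexivity. }
    unfold PSeries at 1. apply is_series_unique.
    assert (HR : forall r, RL (fun k => tr (INR r * th n l) * PS_derive (ar n r) k) x).
    { intros r. unfold RL. rewrite (CV_radius_ext _ (PS_derive (fun k => tr (INR r * th n l) * ar n r k))).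
      apply RL_der, RL_scal_ar; auto. intros k; unfold PS_derive; ring. }
    apply is_series_ext with (2 := is_ps_sum (fun r k => tr (INR r * th n l) * PS_derive (ar n r) k) (n-1) x HR).
    intros; reflexivity.
Qed.

Lemma sum_uu n x : (1 <= n)%nat -> Rabs x < 1 ->
  ssum (fun l => A (th n (S l)) x ^ 2 + B (th n (S l)) x ^ 2) (n - 1) = INR n * ssum (fun r => G n r x * G n r x) (n-1).
Proof.
  intros Hn Hx. rewrite <- parseval by auto. apply sn_ext. intros l _.
  destruct (split_gen cos cos_period (fun z => Rabs_le _ _ (COS_bound z)) n (S l) x Hn Hx) as [Ea _].
  destruct (split_gen sin sin_period (fun z => Rabs_le _ _ (SIN_bound z)) n (S l) x Hn Hx) as [Eb _].
  unfold A, B, ac, as_. rewrite Ea, Eb. ring.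
Qed.

Lemma sum_ud n x : (1 <= n)%nat -> Rabs x < 1 ->
  ssum (fun l => A (th n (S l)) x * A' (th n (S l)) x + B (th n (S l)) x * B' (th n (S l)) x) (n - 1)
  = INR n * ssum (fun r => G n r x * D n r x) (n-1).
Proof.
  intros Hn Hx. rewrite <- parseval by auto. apply sn_ext. intros l _.
  destruct (split_gen cos cos_period (fun z => Rabs_le _ _ (COS_bound z)) n (S l) x Hn Hx) as [Ea Ea'].
  destruct (split_gen sin sin_period (fun z => Rabs_le _ _ (SIN_bound z)) n (S l) x Hn Hx) as [Eb Eb'].
  unfold A, B, A', B', ac, as_. rewrite Ea, Eb, Ea', Eb'. ring.
Qed.

Lemma H_ssum n x : (1 <= n)%nat -> H n x = ssum (fun l => fterm (cos (th n (S l))) x) (n - 1).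
Proof.
  intros Hn. unfold H, sum_f, ssum. rewrite sum_n_Reals. apply sum_eq. intros i _.
  replace (i + 1)%nat with (S i) by lia. reflexivity.
Qed.

Lemma H_lt1 n x : (1 <= n)%nat -> Rabs x < 1 ->
  H n x = INR n * ssum (fun r => G n r x * G n r x) (n-1) + 2 * x * (INR n * ssum (fun r => G n r x * D n r x) (n-1)).
Proof.
  intros Hn Hx. rewrite H_ssum by auto. rewrite <- sum_uu, <- sum_ud by auto.
  rewrite <- sn_mult_l, <- sn_plus. apply sn_ext. intros l _. apply term_lt1; auto.
Qed.

Lemma H_gt1 n x : (1 <= n)%nat -> 1 < x ->
  H n x = - 2 * (/x) ^ 2 * (INR n * ssum (fun r => G n r (/x) * D n r (/x)) (n-1)).
Proof.
  intros Hn Hx.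
  assert (Hy : Rabs (/x) < 1).
  { rewrite Rabs_pos_eq by (left; apply Rinv_0_lt_compat; lra).
    rewrite <- Rinv_1. apply Rinv_lt_contravar; lra. }
  rewrite H_ssum by auto. rewrite <- sum_ud by auto.
  rewrite <- sn_mult_l. apply sn_ext. intros l _. apply term_gt1; auto.
Qed.

Lemma ex_ps a x : RL a x -> ex_series (fun k => a k * x ^ k).
Proof. intros H. eexists. apply (is_ps a x H). Qed.

Lemma ps_mono a x y : (forall j, 0 <= a j) -> 0 <= x <= y -> RL a y -> PSeries a x <= PSeries a y.
Proof.
  intros Ha Hxy HR. unfold PSeries. apply Series_le; [|apply ex_ps; auto].
  intros j. split.
  - apply Rmult_le_pos; auto. apply pow_le; lra.
  - apply Rmult_le_compat_l; auto. apply pow_incr; lra.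
Qed.

Lemma ps_nonneg a y : (forall j, 0 <= a j) -> 0 <= y -> RL a y -> 0 <= PSeries a y.
Proof.
  intros Ha Hy HR.
  pose proof (ps_mono a 0 y Ha (conj (Rle_refl 0) Hy) HR). rewrite PSeries_0 in H. pose proof (Ha 0%nat). lra.
Qed.

Lemma RL_ar n r x : Rabs x < 1 -> RL (ar n r) x.
Proof. intros; apply cv_bound; auto; apply ar_bound. Qed.

Lemma dar_nonneg n r j : 0 <= PS_derive (ar n r) j.
Proof. unfold PS_derive. apply Rmult_le_pos; [apply pos_INR|apply ar_nonneg]. Qed.

Lemma abs_lt1 x : 0 <= x < 1 -> Rabs x < 1.
Proof. intros; rewrite Rabs_pos_eq; lra. Qed.

Lemma G_mono n r x y : 0 <= x <= y -> y < 1 -> 0 <= G n r x <= G n r y.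
Proof.
  intros. unfold G. split.
  - apply ps_nonneg; [apply ar_nonneg|lra|apply RL_ar, abs_lt1; lra].
  - apply ps_mono; [apply ar_nonneg|lra|apply RL_ar, abs_lt1; lra].
Qed.

Lemma D_mono n r x y : 0 <= x <= y -> y < 1 -> 0 <= D n r x <= D n r y.
Proof.
  intros. unfold D. split.
  - apply ps_nonneg; [apply dar_nonneg|lra|apply RL_der, RL_ar, abs_lt1; lra].
  - apply ps_mono; [apply dar_nonneg|lra|apply RL_der, RL_ar, abs_lt1; lra].
Qed.

Lemma G0_ge1 n x : (1 <= n)%nat -> 0 <= x < 1 -> 1 <= G n 0 x.
Proof.
  intros Hn Hx. assert (G n 0 0 = 1).
  { unfold G. rewrite PSeries_0. unfold ar. rewrite Nat.Div0.mod_0_l. reflexivity. }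
  pose proof (G_mono n 0 0 x). lra.
Qed.

Lemma D0_pos n y : (1 <= n)%nat -> 0 < y < 1 -> 0 < D n 0 y.
Proof.
  intros Hn Hy. unfold D, PSeries.
  assert (HR : RL (PS_derive (ar n 0)) y) by (apply RL_der, RL_ar, abs_lt1; lra).
  rewrite (Series_incr_n _ n) by (auto; apply ex_ps; auto).
  assert (Hnn : forall k, 0 <= PS_derive (ar n 0) k * y ^ k).
  { intros k. apply Rmult_le_pos; [apply dar_nonneg|apply pow_le; lra]. }
  assert (T : 0 <= Series (fun k => PS_derive (ar n 0) (n + k) * y ^ (n + k))).
  { replace 0 with (Series (fun _ => 0)).
    - apply Series_le; [intros; split; [lra|apply Hnn]|].
      apply (ex_series_incr_n (fun k => PS_derive (ar n 0) k * y ^ k) n). apply ex_ps; auto.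
    - transitivity (Series (fun _ : nat => 0 * 0)). apply Series_ext; intros; rr. rewrite (Series_scal_l 0 (fun _ => 0)). ring. }
  assert (L : 0 < PS_derive (ar n 0) (pred n) * y ^ (pred n)).
  { apply Rmult_lt_0_compat; [|apply pow_lt; lra].
    unfold PS_derive, ar. replace (S (pred n)) with n by lia. rewrite Nat.Div0.mod_same.
    simpl. apply Rmult_lt_0_compat; [apply lt_0_INR; lia| apply al_pos]. }
  assert (S0 : PS_derive (ar n 0) (pred n) * y ^ (pred n) <= sum_f_R0 (fun k => PS_derive (ar n 0) k * y ^ k) (pred n)).
  { destruct (pred n). simpl; lra. simpl. pose proof (cond_pos_sum _ n0 Hnn). lra. }
  lra.
Qed.

Lemma ssum_le (a b : nat -> R) m : (forall k, (k <= m)%nat -> a k <= b k) -> ssum a m <= ssum b m.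
Proof.
  induction m; intros Hab. rewrite !sn_0; auto.
  rewrite !sn_S. pose proof (IHm (fun k Hk => Hab k (le_S _ _ Hk))). pose proof (Hab (S m) (le_n _)). lra.
Qed.

Lemma ssum_lt0 (a b : nat -> R) m : (forall k, (k <= m)%nat -> a k <= b k) -> a 0%nat < b 0%nat -> ssum a m < ssum b m.
Proof.
  induction m; intros Hab H0. rewrite !sn_0; auto.
  rewrite !sn_S. pose proof (IHm (fun k Hk => Hab k (le_S _ _ Hk)) H0). pose proof (Hab (S m) (le_n _)). lra.
Qed.

Lemma ssum_nonneg (a : nat -> R) m : (forall k, (k <= m)%nat -> 0 <= a k) -> 0 <= ssum a m.
Proof.
  intros Ha. replace 0 with (ssum (fun _ => 0) m). apply ssum_le; auto.
  rewrite sn_const. ring.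
Qed.

Lemma ssum_ge_last (a : nat -> R) m : (forall k, (k < m)%nat -> 0 <= a k) -> a m <= ssum a m.
Proof.
  intros Ha. destruct m. rewrite sn_0; lra.
  rewrite sn_S. assert (0 <= ssum a m) by (apply ssum_nonneg; intros; apply Ha; lia). lra.
Qed.

Lemma ssum_le_last (a : nat -> R) K m : (forall k, (k < m)%nat -> a k <= K) -> ssum a m <= INR m * K + a m.
Proof.
  induction m; intros Ha. rewrite sn_0; simpl; lra.
  rewrite sn_S. pose proof (IHm (fun k Hk => Ha k (le_S _ _ Hk))). pose proof (Ha m (le_n _)).
  rewrite S_INR. lra.
Qed.

Lemma ssum_ge_term (a : nat -> R) m j : (forall k, (k <= m)%nat -> 0 <= a k) -> (j <= m)%nat -> a j <= ssum a m.
Proof.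
  induction m; intros Ha Hj.
  - replace j with 0%nat by lia. rewrite sn_0; lra.
  - rewrite sn_S. destruct (Nat.eq_dec j (S m)).
    + subst. assert (0 <= ssum a m) by (apply ssum_nonneg; intros; apply Ha; lia). lra.
    + assert (a j <= ssum a m) by (apply IHm; [intros; apply Ha|]; lia).
      pose proof (Ha (S m) (le_n _)). lra.
Qed.

Lemma ssum_abs (a : nat -> R) K m : (forall k, (k <= m)%nat -> Rabs (a k) <= K) -> Rabs (ssum a m) <= INR (S m) * K.
Proof.
  induction m; intros Ha.
  - rewrite sn_0. simpl. pose proof (Ha 0%nat (le_n _)). lra.
  - rewrite sn_S. eapply Rle_trans; [apply Rabs_triang|].
    pose proof (IHm (fun k Hk => Ha k (le_S _ _ Hk))). pose proof (Ha (S m) (le_n _)).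
    rewrite (S_INR (S m)). lra.
Qed.

Lemma H_mono1 n x y : (1 <= n)%nat -> 0 <= x -> x < y -> y < 1 -> H n x < H n y.
Proof.
  intros Hn Hx Hxy Hy.
  rewrite !H_lt1 by (auto; apply abs_lt1; lra).
  assert (Hn' : 0 < INR n) by (apply lt_0_INR; lia).
  rewrite <- !Rmult_assoc, (Rmult_comm (2 * x)), (Rmult_comm (2 * y)), !Rmult_assoc, <- !Rmult_plus_distr_l.
  apply Rmult_lt_compat_l; auto.
  rewrite <- !sn_mult_l, <- !sn_plus.
  apply ssum_lt0.
  - intros r _. destruct (G_mono n r x y) as [G1 G2]; try lra. destruct (D_mono n r x y) as [D1 D2]; try lra.
    assert (G n r x * D n r x <= G n r y * D n r y) by nra.
    assert (0 <= G n r x * D n r x) by nra. nra.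
  - destruct (G_mono n 0 x y) as [G1 G2]; try lra. destruct (D_mono n 0 x y) as [D1 D2]; try lra.
    pose proof (G0_ge1 n y Hn ltac:(lra)). pose proof (D0_pos n y Hn ltac:(lra)).
    assert (G n 0 x * D n 0 x <= G n 0 y * D n 0 y) by nra.
    assert (0 <= G n 0 x * D n 0 x) by nra.
    assert (0 < G n 0 y * D n 0 y) by nra. nra.
Qed.

Lemma H_mono2 n x y : (1 <= n)%nat -> 1 < x -> x < y -> H n x < H n y.
Proof.
  intros Hn Hx Hxy.
  rewrite !H_gt1 by (auto; lra).
  assert (Hn' : 0 < INR n) by (apply lt_0_INR; lia).
  assert (Hv : 0 < / y < / x) by (split; [apply Rinv_0_lt_compat; lra| apply Rinv_lt_contravar; nra]).
  assert (Hu : / x < 1) by (rewrite <- Rinv_1; apply Rinv_lt_contravar; lra).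
  set (u := / x) in *. set (v := / y) in *.
  assert (ssum (fun r => v ^ 2 * (G n r v * D n r v)) (n-1) < ssum (fun r => u ^ 2 * (G n r u * D n r u)) (n-1)).
  { apply ssum_lt0.
    - intros r _. destruct (G_mono n r v u) as [G1 G2]; try lra. destruct (D_mono n r v u) as [D1 D2]; try lra.
      assert (G n r v * D n r v <= G n r u * D n r u) by nra.
      assert (0 <= G n r v * D n r v) by nra. apply Rmult_le_compat; try nra; apply pow_le; lra.
    - destruct (G_mono n 0 v u) as [G1 G2]; try lra. destruct (D_mono n 0 v u) as [D1 D2]; try lra.
      pose proof (G0_ge1 n u Hn ltac:(lra)). pose proof (D0_pos n u Hn ltac:(lra)).
      assert (G n 0 v * D n 0 v <= G n 0 u * D n 0 u) by nra.
      assert (0 <= G n 0 v * D n 0 v) by nra.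
      assert (0 < G n 0 u * D n 0 u) by nra.
      assert (v^2 < u^2) by nra. assert (v^2 * (G n 0 v * D n 0 v) <= v^2 * (G n 0 u * D n 0 u)) by (apply Rmult_le_compat_l; nra).
      assert (v^2 * (G n 0 u * D n 0 u) < u^2 * (G n 0 u * D n 0 u)) by (apply Rmult_lt_compat_r; nra). lra. }
  rewrite !sn_mult_l in H. nra.
Qed.

Lemma fterm_nonneg t x : 0 <= x < 1 -> 0 <= fterm (cos t) x.
Proof.
  intros Hx. unfold fterm. pose proof (COS_bound t).
  pose proof (q_pos t x (abs_lt1 x Hx)). rewrite rp32 by auto.
  apply Rdiv_le_0_compat; [nra|]. apply Rmult_lt_0_compat; auto. apply sqrt_lt_R0; auto.
Qed.

Lemma fterm_one_lt x : x < 1 -> fterm 1 x = / (1 - x) ^ 2.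
Proof.
  intros Hx. unfold fterm. replace (1 + x ^ 2 - 2 * x * 1) with (Rsqr (1 - x)) by (unfold Rsqr; ring).
  rewrite rp32 by (apply Rlt_0_sqr; lra). rewrite sqrt_Rsqr by lra. unfold Rsqr. field. lra.
Qed.

Lemma fterm_one_gt x : 1 < x -> fterm 1 x = - / (x - 1) ^ 2.
Proof.
  intros Hx. unfold fterm. replace (1 + x ^ 2 - 2 * x * 1) with (Rsqr (x - 1)) by (unfold Rsqr; ring).
  rewrite rp32 by (apply Rlt_0_sqr; lra). rewrite sqrt_Rsqr by lra. unfold Rsqr. field. lra.
Qed.

Lemma fterm_ub c x : -1 <= c < 1 -> 1 < x -> fterm c x <= / Rmin (1/4) (1 - c).
Proof.
  intros Hc Hx. unfold fterm.
  set (q := 1 + x ^ 2 - 2 * x * c).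
  assert (Hm : 0 < Rmin (1/4) (1 - c)) by (apply Rmin_glb_lt; lra).
  assert (Hqm : Rmin (1/4) (1 - c) <= q).
  { destruct (Rle_dec c (1/2)).
    - apply Rle_trans with (1/4); [apply Rmin_l|]. unfold q. nra.
    - apply Rle_trans with (1 - c); [apply Rmin_r|]. unfold q. nra. }
  assert (Hq : 0 < q) by lra.
  rewrite rp32 by auto. pose proof (sqrt_lt_R0 q Hq).
  assert (/ q <= / Rmin (1/4) (1 - c)) by (apply Rinv_le_contravar; auto).
  destruct (Rle_dec (1 - x * c) 0).
  - assert ((1 - x * c) / (q * sqrt q) <= 0).
    { unfold Rdiv. apply Rmult_le_0_r; auto. left; apply Rinv_0_lt_compat; nra. }
    assert (0 < / Rmin (1/4) (1 - c)) by (apply Rinv_0_lt_compat; auto). lra.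
  - assert (Hs : 1 - x * c <= sqrt q).
    { rewrite <- (sqrt_Rsqr (1 - x * c)) by lra. apply sqrt_le_1_alt. unfold Rsqr, q. assert (0 <= x^2 * ((1 - c) * (1 + c))) by (apply Rmult_le_pos; [apply pow2_ge_0|nra]). nra. }
    apply Rle_trans with (/ q); auto.
    apply (Rmult_le_reg_r (q * sqrt q)); [nra|].
    unfold Rdiv. rewrite Rmult_assoc, Rinv_l by nra. field_simplify; nra.
Qed.

Lemma fterm_abs t x : 3 <= x -> Rabs (fterm (cos t) x) <= 2 / (x - 1).
Proof.
  intros Hx. unfold fterm. pose proof (COS_bound t). set (c := cos t) in *.
  set (q := 1 + x ^ 2 - 2 * x * c).
  assert (Hq1 : (x - 1) ^ 2 <= q) by (unfold q; nra).
  assert (Hq : 0 < q) by nra.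
  rewrite rp32 by auto.
  assert (Hs : x - 1 <= sqrt q).
  { rewrite <- (sqrt_Rsqr (x - 1)) by lra. apply sqrt_le_1_alt. unfold Rsqr; nra. }
  assert (Hp : Rabs (1 - x * c) <= 2 * (x - 1)) by (apply Rabs_le; nra).
  unfold Rdiv. rewrite Rabs_mult, Rabs_inv, (Rabs_pos_eq (q * sqrt q)) by nra.
  assert (0 < (x-1)^3) by (apply pow_lt; lra).
  apply Rle_trans with (2 * (x - 1) * / ((x-1)^3)).
  - apply Rmult_le_compat; auto. apply Rabs_pos. left; apply Rinv_0_lt_compat; nra.
    apply Rinv_le_contravar; auto. replace ((x-1)^3) with ((x-1)^2 * (x-1)) by ring.
    apply Rmult_le_compat; nra.
  - replace (2 * (x - 1) * / (x - 1) ^ 3) with (2 / (x-1) * / (x - 1)) by (field; lra).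
    replace (2 * / (x - 1)) with (2 / (x - 1) * 1) by (field; lra).
    apply Rmult_le_compat_l. apply Rdiv_le_0_compat; lra.
    rewrite <- Rinv_1. apply Rinv_le_contravar; lra.
Qed.

Lemma cos_th_n n : (1 <= n)%nat -> cos (th n n) = 1.
Proof.
  intros Hn. assert (0 < INR n) by (apply lt_0_INR; lia).
  unfold th. replace (2 * PI * INR n / INR n) with (2 * PI) by (field; lra). apply cos_2PI.
Qed.

Lemma cos_th_lt n l : (0 < l < n)%nat -> cos (th n l) < 1.
Proof.
  intros Hl. assert (0 < INR n) by (apply lt_0_INR; lia).
  assert (INR l < INR n) by (apply lt_INR; lia). assert (0 < INR l) by (apply lt_0_INR; lia).
  pose proof PI_RGT_0.
  replace (th n l) with (2 * (PI * INR l / INR n)) by (unfold th; field; lra).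
  rewrite cos_2a_sin.
  assert (0 < sin (PI * INR l / INR n)).
  { apply sin_gt_0. apply Rdiv_lt_0_compat; nra.
    apply (Rmult_lt_reg_r (INR n)); auto. unfold Rdiv. rewrite Rmult_assoc, Rinv_l by lra. nra. }
  nra.
Qed.

Lemma k0 n : (1 <= n)%nat -> k n 0 = 0.
Proof.
  intros Hn. unfold k. rewrite H_ssum by auto.
  rewrite (sn_ext _ (fun _ => 1)).
  - rewrite sn_const. replace (S (n - 1)) with n by lia. field. apply not_0_INR; lia.
  - intros l _. unfold fterm. replace (1 + 0 ^ 2 - 2 * 0 * cos (th n (S l))) with 1 by ring.
    rewrite rp32, sqrt_1 by lra. field.
Qed.

Lemma H_lb n x : (1 <= n)%nat -> 0 <= x < 1 -> / (1 - x) ^ 2 <= H n x.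
Proof.
  intros Hn Hx. rewrite H_ssum by auto.
  rewrite <- fterm_one_lt by lra. rewrite <- (cos_th_n n Hn).
  replace (th n n) with (th n (S (n - 1))) by (f_equal; lia).
  apply (ssum_ge_last (fun l => fterm (cos (th n (S l))) x)). intros; apply fterm_nonneg; auto.
Qed.

Lemma H_ub n : (1 <= n)%nat -> exists K, 0 <= K /\ forall x, 1 < x -> H n x <= K - / (x - 1) ^ 2.
Proof.
  intros Hn.
  set (Kl := fun l => Rabs (/ Rmin (1/4) (1 - cos (th n (S l))))).
  exists (INR (n - 1) * ssum Kl (n - 1)). split.
  { apply Rmult_le_pos; [apply pos_INR|]. apply ssum_nonneg. intros; apply Rabs_pos. }
  intros y Hy. rewrite H_ssum by auto.
  match goal with |- _ <= ?K - _ => replace (K - / (y - 1) ^ 2) with (K + fterm 1 y) by (rewrite fterm_one_gt; [ring|lra]) end.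
  rewrite <- (cos_th_n n Hn).
  replace (th n n) with (th n (S (n - 1))) by (f_equal; lia).
  apply (ssum_le_last (fun l => fterm (cos (th n (S l))) y)). intros l Hl.
  apply Rle_trans with (Kl l).
  - apply Rle_trans with (/ Rmin (1/4) (1 - cos (th n (S l)))); [|apply RRle_abs].
    apply fterm_ub; auto. split; [apply COS_bound|]. apply cos_th_lt; lia.
  - apply ssum_ge_term; [intros; apply Rabs_pos|lia].
Qed.

Lemma H_abs n x : (1 <= n)%nat -> 3 <= x -> Rabs (H n x) <= INR n * (2 / (x - 1)).
Proof.
  intros Hn Hx. rewrite H_ssum by auto. replace (INR n) with (INR (S (n - 1))) by (f_equal; lia).
  apply ssum_abs. intros; apply fterm_abs; auto.
Qed.

Theorem lemma1 (n : nat) (hn : (1 <= n)%nat) :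
  k n 0 = 0 /\
  (forall x y : R, 0 <= x -> x < y -> y < 1 -> k n x < k n y) /\
  (forall x y : R, 1 < x -> x < y -> k n x < k n y) /\
  filterlim (k n) (at_left 1) (Rbar_locally p_infty) /\
  filterlim (k n) (at_right 1) (Rbar_locally m_infty) /\
  filterlim (k n) (Rbar_locally p_infty) (locally (-1)).
Proof.
  assert (Hn : 0 < INR n) by (apply lt_0_INR; lia).
  assert (Hkm : forall x y, H n x < H n y -> k n x < k n y).
  { intros x y Hxy. unfold k. unfold Rminus. apply Rplus_lt_compat_r.
    unfold Rdiv. apply Rmult_lt_compat_r; auto. apply Rinv_0_lt_compat; auto. }
  split; [apply k0; auto|].
  split. { intros x y Hx Hxy Hy. apply Hkm, H_mono1; auto. }
  split. { intros x y Hx Hxy. apply Hkm, H_mono2; auto. }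
  split.
  { intros P [M HM].
    set (d := / (INR n * Rabs (M + 1) + 1)).
    assert (Hd0 : 0 < d) by (apply Rinv_0_lt_compat; pose proof (Rabs_pos (M+1)); nra).
    assert (Hd1 : d <= 1).
    { unfold d. assert (1 <= INR n * Rabs (M + 1) + 1) as Hq by (pose proof (Rabs_pos (M+1)); nra).
      apply Rinv_le_contravar in Hq; [|lra]. rewrite Rinv_1 in Hq; exact Hq. }
    exists (mkposreal d Hd0). intros x Hb Hx1. simpl in Hb.
    change (Rabs (x - 1) < d) in Hb. rewrite Rabs_left in Hb by lra.
    apply HM. unfold k.
    assert (Hlb := H_lb n x hn ltac:(lra)).
    assert (Hsq : (1 - x) ^ 2 < d) by nra.
    assert (Hi : / d < / (1 - x) ^ 2) by (apply Rinv_lt_contravar; [apply Rmult_lt_0_compat; nra|auto]).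
    unfold d in Hi. rewrite Rinv_inv in Hi.
    assert (Hj : INR n * Rabs (M + 1) + 1 < H n x) by lra.
    apply (Rmult_lt_reg_r (INR n)); auto.
    replace ((H n x / INR n - 1) * INR n) with (H n x - INR n) by (field; lra).
    pose proof (Rle_abs (M + 1)). nra. }
  split.
  { intros P [M HM].
    destruct (H_ub n hn) as [K [HK0 HK]].
    set (d := / (K + INR n * Rabs (M + 1) + 1)).
    assert (Hd0 : 0 < d) by (apply Rinv_0_lt_compat; pose proof (Rabs_pos (M+1)); nra).
    assert (Hd1 : d <= 1).
    { unfold d. assert (1 <= K + INR n * Rabs (M + 1) + 1) as Hq by (pose proof (Rabs_pos (M+1)); nra).
      apply Rinv_le_contravar in Hq; [|lra]. rewrite Rinv_1 in Hq; exact Hq. }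
    exists (mkposreal d Hd0). intros x Hb Hx1. simpl in Hb.
    change (Rabs (x - 1) < d) in Hb. rewrite Rabs_pos_eq in Hb by lra.
    apply HM. unfold k.
    assert (Hub := HK x Hx1).
    assert (Hsq : (x - 1) ^ 2 < d) by nra.
    assert (Hi : / d < / (x - 1) ^ 2) by (apply Rinv_lt_contravar; [apply Rmult_lt_0_compat; nra|auto]).
    unfold d in Hi. rewrite Rinv_inv in Hi.
    assert (Hj : H n x < - INR n * Rabs (M + 1) - 1) by lra.
    apply (Rmult_lt_reg_r (INR n)); auto.
    replace ((H n x / INR n - 1) * INR n) with (H n x - INR n) by (field; lra).
    pose proof (Rle_abs (M + 1)). pose proof (Rle_abs (-(M + 1))). rewrite Rabs_Ropp in *. nra. }
  { intros P [eps HP].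
    exists (Rmax 3 (1 + 2 / eps)). intros x Hx.
    assert (Hx3 : 3 < x) by (eapply Rle_lt_trans; [apply Rmax_l|exact Hx]).
    assert (Hxe : 1 + 2 / eps < x) by (eapply Rle_lt_trans; [apply Rmax_r|exact Hx]).
    apply HP. change (Rabs (k n x - -1) < eps).
    unfold k. replace (H n x / INR n - 1 - -1) with (H n x / INR n) by ring.
    unfold Rdiv. rewrite Rabs_mult, (Rabs_pos_eq (/ INR n)) by (left; apply Rinv_0_lt_compat; auto).
    pose proof (H_abs n x hn ltac:(lra)) as Ha.
    apply Rle_lt_trans with (INR n * (2 / (x - 1)) * / INR n).
    { apply Rmult_le_compat_r; auto. left; apply Rinv_0_lt_compat; auto. }
    replace (INR n * (2 / (x - 1)) * / INR n) with (2 / (x - 1)) by (field; lra).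
    pose proof (cond_pos eps) as He.
    apply (Rmult_lt_reg_r (x - 1)); [lra|]. unfold Rdiv. rewrite Rmult_assoc, Rinv_l by lra.
    assert (He2 : 2 / eps * eps = 2) by (field; lra). nra. }
Qed.
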